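(* In the setting of the context, assume (G2') and (HJ'), and let $\tilde\rho$ be a metric on $X$ inducing its topology, with constants $\gamma\ge1$, $C\ge1$ such that $C^{-1}\tilde\rho(x,y)^{-\gamma}\le\tilde G(x,y)\le C\tilde\rho(x,y)^{-\gamma}$ for all $x,y$. Then there exist $\tilde\alpha\in(0,1)$ and $\tilde c_J\ge1$ such that for all $x\in X_0$, $0<r<\tilde\alpha\tilde R_0(x)$ and $y\in\tilde U(x,\tilde\alpha^2r)$, $$\tilde\mu_x^{\tilde U(x,\tilde\alpha r)}(E)\le\tilde c_J\,\tilde\mu_y^{\tilde U(x,r)}(E)\qquad\text{for every Borel }E\subseteq X\setminus\tilde U(x,r).$$
   Context: $(X,\rho)$ separable metric space, $X_0\subsetneq X$ open. For every open $U\subseteq X$ and $x\in X$ a finite Borel measure $\mu_x^U$ is given such that for all open $U,V$ and $x$: $\mu_x^U(U)=0$, $\mu_x^U(X)\le1$, $\mu_x^U=\varepsilon_x$ (Dirac) if $x\notin U$; $y\mapsto\mu_y^U(E)$ universally measurable for Borel $E$; $\mu_x^U=\int\mu_y^U\,d\mu_x^V(y)$ if $V\subseteq U$. $\tilde\mu_x^U:=\frac{w}{w(x)}\mu_x^U$ (measure with density $w/w(x)$ w.r.t. $\mu_x^U$). $G\colon X\times X\to(0,\infty]$ Borel; $V(x,s):=\{y:G(y,x)^{-1}<s\}$, $\overset\circ V(x,s)$ its interior, $S_0(x):=\sup\{s>0:\overline{V(x,s)}\subseteq X_0\}$ for $x\in X_0$. $\tilde U(x,r):=\{y:\tilde\rho(x,y)<r\}$,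 $\tilde R_0(x):=\sup\{r>0:\overline{\tilde U(x,r)}\subseteq X_0\}$. (G2'): for every $x$, $G(x,x)=\lim_{y\to x}G(y,x)=\infty$; there is a Borel $w$ with $0<w\le1$ and $\int w\,d\mu_x^U\le w(x)$ for all open $U$, $x$; there is $\tilde c>1$ with $\tilde G(x,z)\wedge\tilde G(y,z)\le\tilde c\tilde G(x,y)$ for all $x,y,z$, where $\tilde G(x,y):=G(x,y)/(w(x)w(y))$; $\lambda:=\inf w(X_0)>0$; for each $x$ and neighborhood $V$ of $x$, $G(\cdot,x)/w$ is bounded on $X\setminus V$. (HJ'): there exist $\alpha\in(0,1)$, $c_J\ge1$ such that for all $x\in X_0$, $0<s<S_0(x)$ and $y\in\overset\circ V(x,\alpha^2s)$, $\mu_x^{\overset\circ V(x,\alpha s)}(E)\le c_J\mu_y^{\overset\circ V(x,s)}(E)$ for every Borel $E\subseteq X\setminus\overset\circ V(x,s)$. *)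

(* Defs.v *)
From HB Require Import structures.
From mathcomp Require Import all_boot all_order all_algebra.
From mathcomp Require Import all_classical all_reals all_analysis measurable_realfun.
Set Implicit Arguments. Unset Strict Implicit. Unset Printing Implicit Defensive.
Import Order.TTheory GRing.Theory Num.Theory.
Local Open Scope classical_set_scope.
Local Open Scope ring_scope.

Definition BorelT (X : ptopologicalType) := g_sigma_algebraType (@open X).

Section defs.
Context {R : realType}.

Definition is_metric {X : Type} (d : X -> X -> R) : Prop :=
  (forall x y, 0 <= d x y) /\ (forall x y, d x y = 0 <-> x = y) /\
  (forall x y, d x y = d y x) /\ (forall x y z, d x z <= d x y + d y z).

Definition induces_topology {X : topologicalType} (d : X -> X -> R) : Prop :=
  forall A : set X, open A <->
    (forall x, A x -> exists2 r : R, 0 < r & [set y | d x y < r] `<=` A).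

Definition separable (X : topologicalType) : Prop :=
  exists D : set X, countable D /\ closure D = setT.

Definition univ_meas_set {X : ptopologicalType} (A : set (BorelT X)) : Prop :=
  forall nu : {measure set (BorelT X) -> \bar R}, (nu setT < +oo)%E ->
    exists B1 B2 : set (BorelT X), [/\ measurable B1, measurable B2,
      B1 `<=` A, A `<=` B2 & nu (B2 `\` B1) = 0%E].

Definition univ_meas_fun {X : ptopologicalType} (f : BorelT X -> \bar R) : Prop :=
  forall B : set (\bar R), measurable B -> univ_meas_set (f @^-1` B).

(* t^{-1} for t in (0, +oo], with +oo^{-1} = 0 *)
Definition einv (t : \bar R) : R :=
  match t with EFin r => r^-1 | _ => 0 end.

Definition Vset {X : Type} (G : X -> X -> \bar R) (x : X) (s : R) : set X :=
  [set y | einv (G y x) < s].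

Definition S0 {X : topologicalType} (G : X -> X -> \bar R) (X0 : set X) (x : X)
  : \bar R :=
  ereal_sup [set (s%:E)%E | s in [set s : R | 0 < s /\ closure (Vset G x s) `<=` X0]].

Definition Uball {X : Type} (d : X -> X -> R) (x : X) (r : R) : set X :=
  [set y | d x y < r].

Definition R0 {X : topologicalType} (d : X -> X -> R) (X0 : set X) (x : X) : \bar R :=
  ereal_sup [set (r%:E)%E | r in [set r : R | 0 < r /\ closure (Uball d x r) `<=` X0]].

Definition Gt {X : Type} (G : X -> X -> \bar R) (w : X -> R) (x y : X) : \bar R :=
  (G x y * ((w x * w y)^-1)%:E)%E.

(* t^{-gamma} in (0, +oo], with 0^{-gamma} = +oo *)
Definition negpow (t gamma : R) : \bar R :=
  if t == 0 then +oo%E else (t `^ (- gamma))%:E.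

Definition mut {X : ptopologicalType}
  (mu : set X -> X -> {measure set (BorelT X) -> \bar R}) (w : X -> R)
  (U : set X) (x : X) (E : set (BorelT X)) : \bar R :=
  (\int[mu U x]_(y in E) (w y / w x)%:E)%E.

Definition kernel_family {X : ptopologicalType}
  (mu : set X -> X -> {measure set (BorelT X) -> \bar R}) : Prop :=
  (forall U x, open U -> mu U x U = 0%E) /\
  (forall U x, open U -> (mu U x setT <= 1)%E) /\
  (forall U x, open U -> ~ U x ->
     forall E : set (BorelT X), measurable E -> mu U x E = (\1_E x)%:E) /\
  (forall U, open U -> forall E : set (BorelT X), measurable E ->
     univ_meas_fun (fun y => mu U y E)) /\
  (forall U V x, open U -> open V -> V `<=` U ->
     forall E : set (BorelT X), measurable E ->
       mu U x E = (\int[mu V x]_y mu U y E)%E).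

Definition G2' {X : ptopologicalType} (X0 : set X)
  (mu : set X -> X -> {measure set (BorelT X) -> \bar R})
  (G : X -> X -> \bar R) (w : BorelT X -> R) : Prop :=
  (forall x, G x x = +oo%E /\ (G^~ x @ x^' --> +oo%E)) /\
    [/\ measurable_fun setT w /\ (forall x, 0 < w x <= 1),
        (forall U x, open U -> (\int[mu U x]_y (w y)%:E <= (w x)%:E)%E),
        (exists2 c : R, 1 < c &
           forall x y z, (Order.min (Gt G w x z) (Gt G w y z) <= c%:E * Gt G w x y)%E),
        (exists2 lam : R, 0 < lam & forall x, X0 x -> lam <= w x) &
        (forall x (V : set X), nbhs x V -> exists M : R,
           forall y, ~ V y -> (G y x * ((w y)^-1)%:E <= M%:E)%E)].

Definition HJ' {X : ptopologicalType} (X0 : set X)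
  (mu : set X -> X -> {measure set (BorelT X) -> \bar R})
  (G : X -> X -> \bar R) : Prop :=
  exists alpha cJ : R, [/\ 0 < alpha < 1, 1 <= cJ &
    forall x, X0 x -> forall s : R, 0 < s -> (s%:E < S0 G X0 x)%E ->
      forall y, (interior (Vset G x (alpha ^+ 2 * s))) y ->
      forall E : set (BorelT X), measurable E ->
        E `<=` ~` interior (Vset G x s) ->
        (mu (interior (Vset G x (alpha * s))) x E
           <= cJ%:E * mu (interior (Vset G x s)) y E)%E].

End defs.

(* Main.v *)
Require Import Defs.
From HB Require Import structures.
From mathcomp Require Import all_boot all_order all_algebra.
From mathcomp Require Import all_classical all_reals all_analysis measurable_realfun.
Import Order.TTheory GRing.Theory Num.Theory.
Local Open Scope classical_set_scope.
Local Open Scope ring_scope.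
Import HBNNSimple.
Require Import Lra.
From mathcomp Require Import lra ring.
Lemma mono_far (R : realType) (X : ptopologicalType)
  (mu : set X -> X -> {measure set (BorelT X) -> \bar R}) :
  kernel_family mu -> forall U1 U2 z (F : set (BorelT X)), open U1 -> open U2 ->
  U1 `<=` U2 -> measurable F -> F `<=` ~` U2 -> (mu U1 z F <= mu U2 z F)%E.
Proof.
move=> [_ [_ [hd [_ hc]]]] U1 U2 z F oU1 oU2 U12 mF FU2.
rewrite (hc U2 U1 z oU2 oU1 U12 F mF).
rewrite ge0_integralTE; last by move=> y; exact: measure_ge0.
apply: le_trans; last first.
  apply: ereal_sup_ubound => /=; exists (indic_nnsfun R mF) => //.
  move=> y /=; rewrite mindicE; case: (boolP (y \in F)) => [/set_mem yF|yF].
    by rewrite (hd U2 y oU2 (FU2 _ yF) F mF) indicE mem_set.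
  exact: (measure_ge0 (mu U2 y) F).
by rewrite sintegral_indic.
Qed.

Lemma int_dom d (T : measurableType d) (R : realType)
  (m1 m2 : {measure set T -> \bar R}) (E : set T) (f : T -> \bar R) :
  measurable E ->
  (forall S, measurable S -> S `<=` E -> (m1 S <= m2 S)%E) ->
  (forall x, (0 <= f x)%E) ->
  (\int[m1]_(x in E) f x <= \int[m2]_(x in E) f x)%E.
Proof.
move=> mE m12 f0; rewrite !ge0_integralE // ge_ereal_sup// => _ [h/= hfS] <-.
apply: le_ereal_sup_tmp; exists (sintegral m2 h); first by exists h.
rewrite !sintegralE lee_fsum// => r [t _ <-].
have [->|h0] := eqVneq (h t) 0%R; first by rewrite !mul0e.
rewrite lee_pmul ?lee_fin//.
apply: m12; first exact: measurable_sfunP.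
move=> u /= hu; have [//|uE] := pselect (E u).
exfalso; move/eqP: h0; apply.
have := hfS u; rewrite /patch ifF; last by apply/negbTE; apply/negP => /set_mem.
rewrite hu => hle; apply/le_anti/andP; split; first by rewrite -lee_fin.
by rewrite -hu; exact: fun_ge0.
Qed.
Lemma Vup (R : realType) (X : Type) (G : X -> X -> \bar R) (w : X -> R)
  (rhot : X -> X -> R) (gamma C : R) (x y : X) (s : R) :
  (forall a b, (0 < G a b)%E) -> (forall a, 0 < w a <= 1) -> 1 <= gamma -> 0 < C ->
  (Gt G w y x <= C%:E * negpow (rhot y x) gamma)%E -> 0 <= rhot y x -> 0 < s ->
  Vset G x s y -> rhot y x `^ gamma < C * s.
Proof.
move=> Gp w01 g1 C0 Hup rp s0; rewrite /Vset /=.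
have Gyx := Gp y x.
have /andP[wy0 wy1] := w01 y; have /andP[wx0 wx1] := w01 x.
have W0 : 0 < w y * w x by rewrite mulr_gt0.
have W1 : w y * w x <= 1 by rewrite mulr_ile1 // ltW.
have [->|r0] := eqVneq (rhot y x) 0.
  by move=> _; rewrite powR0 ?mulr_gt0 // gt_eqF // (lt_le_trans ltr01 g1).
move: Hup; rewrite /negpow (negbTE r0) /Gt.
case E: (G y x) Gyx => [g| |] //; last first.
  by rewrite gt0_mulye ?lte_fin ?invr_gt0 // -EFinM leye_eq.
rewrite lte_fin => g0; rewrite -!EFinM lee_fin powRN /einv => h1 hg.
set P := rhot y x `^ gamma in h1 *.
have P0 : 0 < P by rewrite powR_gt0 // lt_neqAle eq_sym r0 rp.
set W := w y * w x in h1 W0 W1.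
have h2 : g <= g * W^-1.
  by rewrite ler_peMr ?(ltW g0) // invf_ge1.
have h3 : g * P <= C.
  have h4 := le_trans h2 h1.
  have iP : P * P^-1 = 1 by rewrite mulfV // gt_eqF.
  by have := ler_wpM2r (ltW P0) h4; rewrite mulfVK // gt_eqF.
have ig : g * g^-1 = 1 by rewrite mulfV // gt_eqF.
have ig0 : 0 < g^-1 by rewrite invr_gt0.
nra.
Qed.

Lemma Vlow (R : realType) (X : Type) (G : X -> X -> \bar R) (w : X -> R)
  (rhot : X -> X -> R) (gamma C l : R) (x y : X) (s : R) :
  (forall a b, (0 < G a b)%E) -> (forall a, 0 < w a <= 1) -> 1 <= gamma -> 0 < C ->
  0 < l -> l <= w y -> l <= w x ->
  ((C^-1)%:E * negpow (rhot y x) gamma <= Gt G w y x)%E -> 0 <= rhot y x ->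
  C * rhot y x `^ gamma < l ^+ 2 * s -> Vset G x s y.
Proof.
move=> Gp w01 g1 C0 l0 ly lx Hlo rp hs; rewrite /Vset /=.
have P0' : 0 <= rhot y x `^ gamma by apply: powR_ge0.
have s0 : 0 < s.
  have : 0 < l ^+ 2 * s by apply: le_lt_trans hs; rewrite mulr_ge0 // ltW.
  by rewrite pmulr_rgt0 // exprn_gt0.
have Gyx := Gp y x.
have /andP[wy0 wy1] := w01 y; have /andP[wx0 wx1] := w01 x.
have W0 : 0 < w y * w x by rewrite mulr_gt0.
have Wl : l ^+ 2 <= w y * w x by rewrite expr2 ler_pM // ltW.
move: Hlo; rewrite /Gt.
case E: (G y x) Gyx => [g| |] //; rewrite /einv //.
rewrite lte_fin => g0.
have [r0|r0] := eqVneq (rhot y x) 0.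
  by rewrite /negpow r0 eqxx gt0_muley ?lte_fin ?invr_gt0 // -EFinM leye_eq.
rewrite /negpow (negbTE r0) -!EFinM lee_fin powRN => h1.
set P := rhot y x `^ gamma in h1 hs P0'.
have P0 : 0 < P by rewrite powR_gt0 // lt_neqAle eq_sym r0 rp.
set W := w y * w x in h1 W0 Wl.
have iC : C * C^-1 = 1 by rewrite mulfV // gt_eqF.
have iP : P * P^-1 = 1 by rewrite mulfV // gt_eqF.
have iW : W * W^-1 = 1 by rewrite mulfV // gt_eqF.
have ig : g * g^-1 = 1 by rewrite mulfV // gt_eqF.
have ig0 : 0 < g^-1 by rewrite invr_gt0.
have h2 : W <= g * (C * P).
  have := ler_wpM2r (ltW (mulr_gt0 (mulr_gt0 C0 P0) W0)) h1.
  have -> : C^-1 * P^-1 * (C * P * W) = W.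
    by field; rewrite !gt_eqF.
  have -> : g * W^-1 * (C * P * W) = g * (C * P).
    by field; rewrite !gt_eqF.
  by [].
have h3 : l ^+ 2 * g^-1 <= C * P.
  have := ler_wpM2r (ltW ig0) (le_trans Wl h2).
  by have -> : g * (C * P) / g = C * P by field; rewrite gt_eqF.
nra.
Qed.

Lemma pow_lt (R : realType) (g k r t : R) : 1 <= g -> 0 < k <= 1 -> 0 < r ->
  0 <= t -> t < k * r -> t `^ g < k * r `^ g.
Proof.
move=> g1 /andP[k0 k1] r0 t0 tk.
have g0 : 0 < g by apply: lt_le_trans ltr01 g1.
have [->|tn0] := eqVneq t 0.
  by rewrite powR0 ?gt_eqF // mulr_gt0 // powR_gt0.
have h1 : t `^ g < (k * r) `^ g.
  by apply: gt0_ltr_powR => //; rewrite nnegrE // mulr_ge0 // ltW.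
apply: (lt_le_trans h1); have k0w := ltW k0; have r0w := ltW r0.
rewrite powRM // ler_wpM2r ?powR_ge0 //.
by apply: ge1r_powR => //; rewrite k0 k1.
Qed.

Lemma pow_inv_lt (R : realType) (g t r : R) : 0 < g -> 0 <= t -> 0 <= r ->
  t `^ g < r `^ g -> t < r.
Proof.
by move=> g0 t0 r0; apply: contraTT; rewrite -!leNgt => rt; apply: ge0_ler_powR; rewrite ?nnegrE // ltW.
Qed.

Lemma Uball_open (R : realType) (X : topologicalType) (d : X -> X -> R) x t :
  is_metric d -> induces_topology d -> open (Uball d x t).
Proof.
move=> [d0 [_ [dsym dtri]]] /(_ (Uball d x t)) [_ h]; apply: h => z /= hz.
exists (t - d x z); first by rewrite subr_gt0.
move=> u /= hu; rewrite /Uball /=.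
have := dtri x z u; lra.
Qed.

Theorem lemma7p6 (R : realType) (X : ptopologicalType)
  (rho : X -> X -> R) (X0 : set X)
  (mu : set X -> X -> {measure set (BorelT X) -> \bar R})
  (G : X -> X -> \bar R)
  (w : BorelT X -> R)
  (rhot : X -> X -> R) (gamma C : R) :
  is_metric rho -> induces_topology rho -> separable X ->
  open X0 -> X0 != setT ->
  kernel_family mu ->
  (forall x y, (0 < G x y)%E) ->
  measurable_fun setT (fun p : (BorelT X * BorelT X)%type => G p.1 p.2) ->
  G2' X0 mu G w -> HJ' X0 mu G ->
  is_metric rhot -> induces_topology rhot ->
  1 <= gamma -> 1 <= C ->
  (forall x y, (C^-1)%:E * negpow (rhot x y) gamma <= Gt G w x y /\
               Gt G w x y <= C%:E * negpow (rhot x y) gamma)%E ->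
  exists alphat cJt : R, [/\ 0 < alphat < 1, 1 <= cJt &
    forall x, X0 x -> forall r : R, 0 < r -> (r%:E < alphat%:E * R0 rhot X0 x)%E ->
      forall y, Uball rhot x (alphat ^+ 2 * r) y ->
      forall E : set (BorelT X), measurable E -> E `<=` ~` Uball rhot x r ->
        (mut mu w (Uball rhot x (alphat * r)) x E
           <= cJt%:E * mut mu w (Uball rhot x r) y E)%E].
Proof.
move=> Hrho Htop Hsep HX0o HX0ne Hk HGp HGm HG2 HHJ Hrt Htopt Hg HC HGt.
case: HG2 => _ [[mw w01] _ _ [lam lam0 Hlam] _].
case: HHJ => alpha [cJ [/andP[a0 a1] cJ1 HJ]].
have C0 : 0 < C by apply: lt_le_trans ltr01 HC.
have g0 : 0 < gamma by apply: lt_le_trans ltr01 Hg.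
have cJ0 : 0 <= cJ by apply: le_trans ler01 cJ1.
pose l := Num.min lam 1.
have l0 : 0 < l by rewrite lt_min lam0 ltr01.
have l1 : l <= 1 by rewrite ge_min lexx orbT.
have lw : forall z, X0 z -> l <= w z by move=> z /Hlam h; rewrite ge_min h.
pose c' := C^-1.
have c'0 : 0 < c' by rewrite invr_gt0.
have c'1 : c' <= 1 by rewrite invf_le1.
have Cc' : C * c' = 1 by rewrite mulfV // gt_eqF.
pose b := l ^+ 2 * alpha * c' ^+ 2.
have b0 : 0 < b by rewrite !mulr_gt0 // exprn_gt0.
have l2 : l ^+ 2 <= 1 by rewrite expr_le1 // ltW.
have c2 : c' ^+ 2 <= 1 by rewrite expr_le1 // ltW.
have b1 : b < 1.
  rewrite /b; have h1 : l ^+ 2 * alpha <= alpha by rewrite ler_piMl // ltW.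
  have h2 : l ^+ 2 * alpha * c' ^+ 2 <= l ^+ 2 * alpha.
    by rewrite ler_piMr // mulr_ge0 // ?exprn_ge0 // ltW.
  exact: (le_lt_trans h2 (le_lt_trans h1 a1)).
have b1' : b <= 1 by rewrite ltW.
exists b, (cJ / l); split.
- by rewrite b0 b1.
- by rewrite ler_pdivlMr // mul1r (le_trans l1 cJ1).
move=> x X0x r r0 hr y hy E mE HE.
have Hrt0 := Hrt; case: Hrt => [d0 [_ [dsym dtri]]].
have rR0 : (r%:E < R0 rhot X0 x)%E.
  rewrite ltNge; apply/negP => hle; move: hr; apply/negP; rewrite -leNgt.
  have bE : (0 <= b%:E)%E by rewrite lee_fin ltW.
  apply: (le_trans (lee_wpmul2l bE hle)).
  by rewrite -EFinM lee_fin ger_pMl // ltW.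
have [_ [r' [r'0 r'cl] <-] rr'] := ereal_sup_gt rR0.
rewrite lte_fin in rr'.
have UX0 : Uball rhot x r `<=` X0.
  move=> z hz; apply: r'cl; apply: subset_closure; rewrite /Uball /=.
  exact: lt_trans hz rr'.
pose s := r `^ gamma * c'.
have s0 : 0 < s by rewrite mulr_gt0 // powR_gt0.
have Vsub : forall t, 0 < t -> Vset G x (t `^ gamma * c') `<=` Uball rhot x t.
  move=> t t0 z hz.
  have := @Vup _ _ _ _ _ _ _ _ _ _ HGp w01 Hg C0 (HGt z x).2 (d0 z x) (mulr_gt0 (powR_gt0 _ t0) c'0) hz.
  rewrite (mulrC (t `^ gamma)) mulrA Cc' mul1r dsym => h.
  exact: (@pow_inv_lt _ _ _ _ g0 (d0 _ _) (ltW t0) h).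
have F1 : Uball rhot x (b * r) `<=` Vset G x (alpha * s).
  move=> z hz.
  have zX0 : X0 z by apply: UX0; rewrite /Uball /=; apply: lt_trans hz _; rewrite gtr_pMl.
  apply: (@Vlow _ _ _ _ _ _ _ _ _ _ _ HGp w01 Hg C0 l0 (lw z zX0) (lw x X0x) (HGt z x).1 (d0 z x)).
  rewrite dsym.
  have bb : 0 < b <= 1 by rewrite b0 b1'.
  have hp := @pow_lt _ _ _ _ _ Hg bb r0 (d0 x z) hz.
  apply: (@lt_le_trans _ _ (C * (b * r `^ gamma))); first by rewrite ltr_pM2l.
  rewrite le_eqVlt; apply/orP; left; apply/eqP; rewrite /b /s /c'.
  by field; rewrite gt_eqF.
have F2 : Uball rhot x (b ^+ 2 * r) `<=` Vset G x (alpha ^+ 2 * s).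
  move=> z hz.
  have b2 : 0 < b ^+ 2 <= 1 by rewrite exprn_gt0 // expr_le1 // ltW.
  have /andP[b20 b21] := b2.
  have zX0 : X0 z.
    apply: UX0; rewrite /Uball /=; apply: lt_le_trans hz _; rewrite ger_pMl //.
  apply: (@Vlow _ _ _ _ _ _ _ _ _ _ _ HGp w01 Hg C0 l0 (lw z zX0) (lw x X0x) (HGt z x).1 (d0 z x)).
  rewrite dsym.
  have hp := @pow_lt _ _ _ _ _ Hg b2 r0 (d0 x z) hz.
  apply: (@lt_le_trans _ _ (C * (b ^+ 2 * r `^ gamma))); first by rewrite ltr_pM2l.
  have -> : C * (b ^+ 2 * r `^ gamma) =
      (l ^+ 2 * c' ^+ 2) * (l ^+ 2 * (alpha ^+ 2 * s)).
    by rewrite /b /s /c'; field; rewrite gt_eqF.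
  have a0' := ltW a0; have l0' := ltW l0; have c0' := ltW c'0.
  apply: ler_piMl.
    by rewrite !mulr_ge0 ?exprn_ge0 ?powR_ge0 // ltW.
  by rewrite mulr_ile1 // exprn_ge0.
have F3 : Vset G x s `<=` Uball rhot x r := Vsub r r0.
have F4 : (s%:E < S0 G X0 x)%E.
  apply: (@lt_le_trans _ _ (r' `^ gamma * c')%:E).
    rewrite lte_fin ltr_pM2r //; apply: gt0_ltr_powR => //; rewrite nnegrE ltW //.
  apply: ereal_sup_ubound; exists (r' `^ gamma * c') => //; split.
    by rewrite mulr_gt0 // powR_gt0.
  by apply: (subset_trans (closureS (Vsub r' r'0))).
have oUb : forall t, open (Uball rhot x t).
  by move=> t; apply: Uball_open.
have int_sub : forall U V : set X, open U -> U `<=` V -> U `<=` V°.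
  move=> U V oU UV z Uz; apply: (interiorS UV).
  by rewrite ((interior_id U).1 oU).
have VsU : forall t, t <= s -> (Vset G x t)° `<=` Uball rhot x r.
  move=> t ts z /interior_subset hz; apply: F3; rewrite /Vset /=.
  exact: lt_le_trans hz ts.
have as_s : alpha * s <= s by rewrite ger_pMl // ltW.
have yint : (Vset G x (alpha ^+ 2 * s))° y := int_sub _ _ (oUb _) F2 y hy.
have hchain : forall F : set (BorelT X), measurable F -> F `<=` E ->
    (mu (Uball rhot x (b * r)) x F <= cJ%:E * mu (Uball rhot x r) y F)%E.
  move=> F mF FE.
  have FnU : F `<=` ~` Uball rhot x r := fun z hz => HE z (FE z hz).
  have Fn1 : F `<=` ~` (Vset G x (alpha * s))°.
    by move=> z /FnU hz /(VsU _ as_s).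
  have Fn2 : F `<=` ~` (Vset G x s)°.
    by move=> z /FnU hz /(VsU _ (lexx s)).
  apply: le_trans (@mono_far _ _ _ Hk (Uball rhot x (b * r)) (Vset G x (alpha * s))°
    x F (oUb _) (@open_interior _ _) (int_sub _ _ (oUb _) F1) mF Fn1) _.
  apply: le_trans (HJ x X0x s s0 F4 y yint F mF Fn2) _.
  apply: lee_wpmul2l; first by rewrite lee_fin.
  exact: (@mono_far _ _ _ Hk (Vset G x s)° (Uball rhot x r) y F
    (@open_interior _ _) (oUb _) (VsU _ (lexx s)) mF FnU).
rewrite /mut.
have wx0 : 0 < w x by have /andP[] := w01 x.
have wy0 : 0 < w y by have /andP[] := w01 y.
have f0 : forall z, (0 <= (w z / w x)%:E)%E.
  by move=> z; rewrite lee_fin divr_ge0 // ltW //; have /andP[] := w01 z.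
have mf : forall c : R, measurable_fun E (fun z => (w z / c)%:E).
  move=> c; apply/measurable_EFinP; apply: measurable_funM.
    exact: measurable_funTS.
  exact: measurable_cst.
pose cJn : {nonneg R} := NngNum cJ0.
have := @int_dom _ _ _ (mu (Uball rhot x (b * r)) x)
  (mscale cJn (mu (Uball rhot x r) y)) E (fun z => (w z / w x)%:E) mE _ f0.
move=> /(_ _) h; apply: le_trans (h _) _.
  by move=> S mS SE; exact: hchain.
rewrite ge0_integral_mscale; [|exact: mE|exact: mf|by move=> *; exact: f0].
have g0y : forall z, (0 <= (w z / w y)%:E)%E.
  by move=> z; rewrite lee_fin divr_ge0 // ltW //; have /andP[] := w01 z.
have -> : (\int[mu (Uball rhot x r) y]_(z in E) (w z / w x)%:E =
    (w y / w x)%:E * \int[mu (Uball rhot x r) y]_(z in E) (w z / w y)%:E)%E.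
  rewrite -ge0_integralZl_EFin //; last by rewrite divr_ge0 // ltW.
  apply: eq_integral => z _; rewrite -EFinM; congr EFin.
  by field; rewrite !gt_eqF.
rewrite muleA -EFinM; apply: lee_wpmul2r.
  by apply: integral_ge0 => z _; exact: g0y.
rewrite lee_fin /=; apply: ler_wpM2l => //.
have wy1 : w y <= 1 by have /andP[] := w01 y.
have lx := lw x X0x.
apply: (@le_trans _ _ (w x)^-1).
  by rewrite ler_pdivrMr // mulVf ?gt_eqF.
by rewrite lef_pV2 // posrE.
Qed.
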